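(* Let $G$ be a finite simple graph with edge ideal $I=I(G)$, fix a total order $L_1>L_2>\dots>L_k$ on the minimal monomial generators (edges) of $I$, and for each $n\geq1$ let $L^{(n)}_1>L^{(n)}_2>\cdots$ be the minimal monomial generators of $I^n$ listed in the order described in the context. Then for every $n\geq1$, every $k'\geq 1$ and every $j\leq k'$: if $(L^{(n)}_j : L^{(n)}_{k'+1})$ is not contained in $(I^{n+1} : L^{(n)}_{k'+1})$, then there exists $i\leq k'$ such that $(L^{(n)}_i : L^{(n)}_{k'+1})$ is generated by a single variable and $(L^{(n)}_j : L^{(n)}_{k'+1})\subseteq (L^{(n)}_i : L^{(n)}_{k'+1})$.
   Context: $S=K[\,x : x\in V(G)\,]$ is the polynomial ring over a field $K$ on the vertices of $G$ and $I(G)=(xy : xy \text{ an edge of } G)$. For monomials $m,m'$, $(m:m')$ denotes the colon ideal $((m):(m'))$. Ordering: for $n\ge1$, every minimal monomial generator $M$ of $I^n$ can be written as $M=L_1^{a_1}\cdots L_k^{a_k}$ with $a_1+\dots+a_k=n$; its maximal expression is the lexicographically largest such exponent vector $(a_1,\dots,a_k)$ (lex: $(a)>_{\mathrm{lex}}(b)$ if at the first index where they differ, $a_i>b_i$). For minimal generators $M,N$ of $I^n$, $M>N$ iff the maximal expression of $M$ is lexicographically larger than that of $N$ (for $n=1$ this is the fixed order on the $L_i$). $L^{(n)}_1>L^{(n)}_2>\cdots$ is the list of all minimal monomial generators of $I^n$ in this decreasing order. *)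

(* Defs.v *)
From mathcomp Require Import all_boot all_algebra.
From mathcomp Require Import mpoly.
Set Implicit Arguments. Unset Strict Implicit. Unset Printing Implicit Defensive.
Import GRing.Theory.
Local Open Scope ring_scope.

Section EdgeIdeals.
Variables (K : fieldType) (d : nat).
Local Notation S := {mpoly K[d]}.

(* Ideals of S are represented by their membership predicates. *)

Definition genI (P : S -> Prop) (f : S) : Prop :=
  exists (gs : seq S) (cs : seq S),
    size cs = size gs /\ (forall g, g \in gs -> P g) /\
    f = \sum_(i < size gs) cs`_i * gs`_i.

Definition princ (m : S) : S -> Prop := genI (fun g => g = m).

Definition mulI (I J : S -> Prop) : S -> Prop :=
  genI (fun h => exists f g, I f /\ J g /\ h = f * g).

Fixpoint powI (I : S -> Prop) (n : nat) : S -> Prop :=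
  if n is n'.+1 then mulI (powI I n') I else genI (fun g => g = 1).

Definition colonI (A : S -> Prop) (m : S) : S -> Prop := fun f => A (f * m).

Definition mcolon (m m' : S) : S -> Prop := colonI (princ m) m'.

Definition subI (A B : S -> Prop) : Prop := forall f, A f -> B f.

Definition gen_by_variable (A : S -> Prop) : Prop :=
  exists v : 'I_d, forall f, A f <-> princ 'X_v f.

Definition simple_graph (E : {set {set 'I_d}}) : Prop :=
  forall e, e \in E -> #|e| = 2%N.

Definition edge_mon (e : {set 'I_d}) : S := \prod_(v in e) 'X_v.

Definition edge_ideal (E : {set {set 'I_d}}) : S -> Prop :=
  genI (fun g => exists2 e, e \in E & g = edge_mon e).

(* Ls is the list L_1 > L_2 > ... > L_k of all edges (a total order) *)
Definition edge_order (E : {set {set 'I_d}}) (Ls : seq {set 'I_d}) : Prop :=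
  uniq Ls /\ forall e, (e \in Ls) = (e \in E).

Definition is_expr (Ls : seq {set 'I_d}) (n : nat) (M : S) (a : seq nat) : Prop :=
  size a = size Ls /\ sumn a = n /\
  M = \prod_(i < size Ls) edge_mon (nth set0 Ls i) ^+ nth 0%N a i.

Definition lex_gt (a b : seq nat) : Prop :=
  exists i, (i < size a)%N /\ (forall l, (l < i)%N -> nth 0%N a l = nth 0%N b l)
            /\ (nth 0%N b i < nth 0%N a i)%N.

Definition is_maxexpr Ls n (M : S) (a : seq nat) : Prop :=
  is_expr Ls n M a /\ forall b, is_expr Ls n M b -> ~ lex_gt b a.

Definition gen_gt Ls n (M N : S) : Prop :=
  exists a b, is_maxexpr Ls n M a /\ is_maxexpr Ls n N b /\ lex_gt a b.

(* the minimal monomial generators of I^n (= all products of n edges,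
   which all have degree 2n) *)
Definition min_gen Ls n (M : S) : Prop := exists a, is_expr Ls n M a.

(* gens = [L^(n)_1; L^(n)_2; ...] : all minimal generators of I^n,
   without repetition, in decreasing order *)
Definition ordered_gens Ls n (gens : seq S) : Prop :=
  uniq gens /\ (forall M, M \in gens <-> min_gen Ls n M) /\
  (forall i j, (i < j)%N -> (j < size gens)%N -> gen_gt Ls n gens`_i gens`_j).

End EdgeIdeals.

(* Main.v *)
Require Import Defs.
From mathcomp Require Import all_boot all_algebra.
From mathcomp Require Import mpoly.
From mathcomp Require Import zify.
Set Implicit Arguments. Unset Strict Implicit. Unset Printing Implicit Defensive.


Section Comb.
Variables (d k : nat) (es : nat -> {set 'I_d}).
Hypothesis Hes : forall i, i < k -> #|es i| = 2.

Definition tot (s : nat -> nat) := \sum_(i < k) s i.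
Definition deg (s : nat -> nat) (v : 'I_d) := \sum_(i < k) s i * (v \in es i).
Definition lev (s t : nat -> nat) := forall i, i < k -> s i <= t i.
Definition nrm R F := \sum_(v < d) ((deg R v - deg F v) + (deg F v - deg R v)).
Definition stuck A B R F := forall v : 'I_d,
  (deg F v < deg R v -> forall i, i < k -> v \in es i -> F i = B i) /\
  (deg R v < deg F v -> forall i, i < k -> v \in es i -> R i = A i).

Lemma deg_le s t v : lev s t -> deg s v <= deg t v.
Proof. move=> H; apply: leq_sum => i _; rewrite leq_mul2r H ?orbT //. Qed.

Lemma tot_le s t : lev s t -> tot s <= tot t.
Proof. move=> H; apply: leq_sum => i _; exact: H. Qed.

Lemma deg_add s t v : deg (fun i => s i + t i) v = deg s v + deg t v.
Proof. by rewrite /deg -big_split /=; apply: eq_bigr => i _; rewrite mulnDl. Qed.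

Lemma tot_add s t : tot (fun i => s i + t i) = tot s + tot t.
Proof. by rewrite /tot -big_split. Qed.

Lemma deg_sub s t v : lev s t -> deg (fun i => t i - s i) v = deg t v - deg s v.
Proof.
move=> H; apply/eqP; rewrite eq_sym -(eqn_add2r (deg s v)) subnK ?deg_le //.
rewrite -deg_add; apply/eqP/eq_bigr => i _; rewrite subnK //; exact: H.
Qed.

Lemma tot_sub s t : lev s t -> tot (fun i => t i - s i) = tot t - tot s.
Proof.
move=> H; apply/eqP; rewrite eq_sym -(eqn_add2r (tot s)) subnK ?tot_le //.
rewrite -tot_add; apply/eqP/eq_bigr => i _; rewrite subnK //; exact: H.
Qed.

Lemma deg_eqS s t v : (forall i, i < k -> v \in es i -> s i = t i) -> deg s v = deg t v.
Proof.
move=> H; apply: eq_bigr => i _; case: (boolP (v \in es i)) => Hv; last by rewrite !muln0.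
by rewrite H.
Qed.

Lemma deg_delta l v : l < k -> deg (fun i => (i == l) : nat) v = (v \in es l).
Proof.
move=> Hl; rewrite /deg (bigD1 (Ordinal Hl)) //= eqxx mul1n big1 ?addn0 //.
move=> i /negbTE; rewrite -val_eqE /= => ->; by rewrite mul0n.
Qed.

Lemma deg_zero v : deg (fun _ => 0) v = 0.
Proof. by rewrite /deg big1. Qed.

Lemma deg_inc s l v : l < k -> deg (fun i => s i + (i == l)) v = deg s v + (v \in es l).
Proof. move=> Hl; by rewrite deg_add deg_delta. Qed.

Lemma tot_inc s l : l < k -> tot (fun i => s i + (i == l)) = (tot s).+1.
Proof.
move=> Hl; rewrite tot_add -addn1; congr (_ + _).
rewrite /tot (bigD1 (Ordinal Hl)) //= eqxx big1 ?addn0 //.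
move=> i /negbTE; rewrite -val_eqE /= => -> //.
Qed.

Lemma sum_ind (v : 'I_d) : \sum_(t < d) ((t == v) : nat) = 1.
Proof. rewrite (bigD1 v) // eqxx big1 ?addn0 // => t /negbTE -> //. Qed.

Lemma sum_card (e : {set 'I_d}) : \sum_(t < d) ((t \in e) : nat) = #|e|.
Proof. by rewrite -sum1_card [RHS]big_mkcond /=; apply: eq_bigr => t _; case: (t \in e). Qed.

Lemma sum_deg s : \sum_(v < d) deg s v = 2 * tot s.
Proof.
rewrite /deg exchange_big /tot big_distrr /=; apply: eq_bigr => i _.
by rewrite -big_distrr /= sum_card Hes // mulnC.
Qed.

Lemma edge2 i v : i < k -> v \in es i -> exists u, u != v /\ es i = [set v; u].
Proof.
move=> Hi Hv; have /eqP := Hes Hi; move/cards2P => [x [y [Hxy E]]].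
rewrite E; move: Hv; rewrite E !inE => /orP [] /eqP ->.
  by exists y; rewrite eq_sym.
by exists x; rewrite setUC.
Qed.

Lemma nrm_step R F l v : l < k -> v \in es l ->
  (forall t, (deg R t - deg F t) + (deg F t - deg R t) = (deg R t - deg F t) + (deg F t - deg R t)) ->
  True.
Proof. done. Qed.

Lemma nrm_stepF R F l v : l < k -> v \in es l -> deg F v < deg R v ->
  nrm R (fun i => F i + (i == l)) <= nrm R F.
Proof.
move=> Hl Hv Hlt; have [u [Huv E]] := edge2 Hl Hv.
rewrite -(leq_add2r 1) -{1}(sum_ind v) -(sum_ind u) /nrm -!big_split /=.
apply: leq_sum => t _; rewrite deg_inc // E !inE.
case: (eqVneq t v) => [->|Htv]; first by rewrite [v == u]eq_sym (negbTE Huv) /=; lia.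
case: (eqVneq t u) => [->|Htu]; rewrite ?eqxx ?(negbTE Htu) /=; lia.
Qed.

Lemma nrm_stepR R F l v : l < k -> v \in es l -> deg R v < deg F v ->
  nrm (fun i => R i + (i == l)) F <= nrm R F.
Proof.
move=> Hl Hv Hlt; have [u [Huv E]] := edge2 Hl Hv.
rewrite -(leq_add2r 1) -{1}(sum_ind v) -(sum_ind u) /nrm -!big_split /=.
apply: leq_sum => t _; rewrite deg_inc // E !inE.
case: (eqVneq t v) => [->|Htv]; first by rewrite [v == u]eq_sym (negbTE Huv) /=; lia.
case: (eqVneq t u) => [->|Htu]; rewrite ?eqxx ?(negbTE Htu) /=; lia.
Qed.

Lemma greedy A B : forall R F, lev R A -> lev F B -> nrm R F <= 2 ->
  exists R' F', [/\ lev R R', lev R' A, lev F F', lev F' B & nrm R' F' <= 2 /\ stuck A B R' F'].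
Proof.
move=> R F; move Hm : ((tot A - tot R) + (tot B - tot F)) => m.
elim/ltn_ind: m R F Hm => m IH R F Hm HRA HFB Hn.
pose bad := [exists v : 'I_d, exists i : 'I_k,
   ((deg F v < deg R v) && (v \in es i) && (F i < B i)) ||
   ((deg R v < deg F v) && (v \in es i) && (R i < A i))].
case: (boolP bad) => Hb; last first.
  exists R, F; split => //; try by move=> i.
  split => // v; split => Hlt i Hi Hv; apply/eqP; rewrite eqn_leq.
  - rewrite HFB //=; apply/negP => /negP; rewrite -ltnNge => Hlt2.
    move/negP: Hb; apply; apply/existsP; exists v; apply/existsP; exists (Ordinal Hi).
    by rewrite /= Hlt Hv Hlt2.
  - rewrite HRA //=; apply/negP => /negP; rewrite -ltnNge => Hlt2.
    move/negP: Hb; apply; apply/existsP; exists v; apply/existsP; exists (Ordinal Hi).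
    by rewrite /= Hlt Hv Hlt2 orbT.
case/existsP: Hb => v /existsP [[i Hi]] /= /orP [] /andP [] /andP [Hlt Hv] Hc.
- set F' := fun j => F j + (j == i).
  have HF'B : lev F' B.
    move=> j Hj; rewrite /F'; case: (eqVneq j i) => [->|_]; rewrite ?addn1 ?addn0 //; exact: HFB.
  have HtF : tot F' = (tot F).+1 by rewrite /F' tot_inc.
  have Ht := tot_le HF'B.
  have HRA' := tot_le HRA.
  have [R2 [F2 [H1 H2 H3 H4 [H5 H6]]]] :=
    IH _ (ltac:(lia) : (tot A - tot R) + (tot B - tot F') < m) R F' erefl HRA HF'B
       (leq_trans (nrm_stepF Hi Hv Hlt) Hn).
  exists R2, F2; split; [exact H1|exact H2| |exact H4|by split].
  move=> j Hj; apply: leq_trans _ (H3 j Hj); exact: leq_addr.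
- set R' := fun j => R j + (j == i).
  have HR'A : lev R' A.
    move=> j Hj; rewrite /R'; case: (eqVneq j i) => [->|_]; rewrite ?addn1 ?addn0 //; exact: HRA.
  have HtF : tot R' = (tot R).+1 by rewrite /R' tot_inc.
  have Ht := tot_le HR'A.
  have HFB' := tot_le HFB.
  have [R2 [F2 [H1 H2 H3 H4 [H5 H6]]]] :=
    IH _ (ltac:(lia) : (tot A - tot R') + (tot B - tot F) < m) R' F erefl HR'A HFB
       (leq_trans (nrm_stepR Hi Hv Hlt) Hn).
  exists R2, F2; split; [ |exact H2|exact H3|exact H4|by split].
  move=> j Hj; apply: leq_trans _ (H1 j Hj); exact: leq_addr.
Qed.


Lemma stuck_C A B R F : lev R A -> lev F B -> stuck A B R F ->
  forall v, deg B v - deg F v + deg R v <= maxn (deg A v) (deg B v).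
Proof.
move=> HRA HFB Hs v; have h1 := deg_le v HRA; have h2 := deg_le v HFB.
case: (ltnP (deg F v) (deg R v)) => Hlt.
  have := deg_eqS (proj1 (Hs v) Hlt) => ->; lia.
lia.
Qed.

Lemma lift A B R F R' F' : lev R A -> lev F B -> stuck A B R F ->
  lev R' (fun i => A i - R i) -> lev F' (fun i => B i - F i) ->
  (forall v, deg (fun i => B i - F i) v - deg F' v + deg R' v <=
      maxn (deg (fun i => A i - R i) v) (deg (fun i => B i - F i) v)) ->
  forall v, deg B v - deg F' v + deg R' v <= maxn (deg A v) (deg B v).
Proof.
move=> HRA HFB Hs HR' HF' H v; have := H v; have h3 := deg_le v HR'; have h4 := deg_le v HF'.
rewrite !deg_sub // in h3 h4 *.
have h1 := deg_le v HRA; have h2 := deg_le v HFB.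
case: (ltnP (deg R v) (deg F v)) => Hlt.
  have := deg_eqS (proj2 (Hs v) Hlt) => E; rewrite E in h3 *; lia.
lia.
Qed.

Lemma lev_subl A R : lev (fun i => A i - R i) A.
Proof. move=> i _; exact: leq_subr. Qed.

Lemma lev_trans a b c : lev a b -> lev b c -> lev a c.
Proof. move=> H1 H2 i Hi; exact: leq_trans (H1 i Hi) (H2 i Hi). Qed.


Lemma tot_pos A : 0 < tot A -> exists l, l < k /\ 0 < A l.
Proof.
move=> H; case: (boolP [exists i : 'I_k, 0 < A i]).
  by case/existsP => i Hi; exists i.
move/existsPn => Hn; move: H; rewrite /tot big1 // => i _.
by apply/eqP; rewrite -leqn0 leqNgt Hn.
Qed.

Lemma nrm_delta l : l < k -> nrm (fun i => (i == l) : nat) (fun _ => 0) = 2.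
Proof.
move=> Hl; rewrite /nrm -(Hes Hl) -sum_card; apply: eq_bigr => v _.
by rewrite deg_delta // deg_zero subn0 sub0n addn0.
Qed.

Lemma start A B l : l < k -> 0 < A l ->
  exists R F, [/\ lev R A, lev F B, 0 < R l, nrm R F <= 2 & stuck A B R F].
Proof.
move=> Hl HA.
have P1 : lev (fun i => (i == l) : nat) A.
  by move=> i Hi; case: (eqVneq i l) => [->|] //.
have P2 : lev (fun _ => 0) B by [].
have P3 : nrm (fun i => (i == l) : nat) (fun _ => 0) <= 2 by rewrite nrm_delta.
have [R [F [H1 H2 H3 H4 [H5 H6]]]] := greedy P1 P2 P3.
exists R, F; split => //; have := H1 l Hl; by rewrite eqxx.
Qed.

Lemma lemD m : forall A B, tot A <= m -> tot B < tot A ->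
  exists R F, [/\ lev R A, lev F B, tot F < tot R &
     forall v, deg B v - deg F v + deg R v <= maxn (deg A v) (deg B v)].
Proof.
elim: m => [|m IH] A B Hm Hlt; first lia.
have [l [Hl HA]] := tot_pos (leq_ltn_trans (leq0n _) Hlt).
have [R [F [HRA HFB HR HN HS]]] := start B Hl HA.
case: (ltnP (tot F) (tot R)) => Ht.
  exists R, F; split => //; exact: stuck_C.
have HtR : 0 < tot R.
  by rewrite /tot (bigD1 (Ordinal Hl)) //= ltn_addr.
have := tot_sub HRA; have := tot_sub HFB; have := tot_le HRA; have := tot_le HFB => h1 h2 h3 h4.
have [R' [F' [H1 H2 H3 H4]]] := IH (fun i => A i - R i) (fun i => B i - F i) ltac:(lia) ltac:(lia).
exists R', F'; split.
- exact: lev_trans H1 (lev_subl _ _).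
- exact: lev_trans H2 (lev_subl _ _).
- exact: H3.
- exact: lift HRA HFB HS H1 H2 H4.
Qed.

Lemma lemCore A B l : l < k -> 0 < A l -> tot A = tot B ->
  ~ (exists C, tot B < tot C /\ forall v, deg C v <= maxn (deg A v) (deg B v)) ->
  exists R F, [/\ lev R A, lev F B, 0 < R l, tot R = tot F &
    (forall v, deg R v = deg F v) \/
    exists w z, [/\ w != z, (forall t, deg R t + (t == z) = deg F t + (t == w)) &
                    deg B w < deg A w]].
Proof.
move=> Hl HA Htot HC.
have [R [F [HRA HFB HR HN HS]]] := start B Hl HA.
have h1 := tot_le HRA; have h2 := tot_le HFB.
case: (ltngtP (tot F) (tot R)) => Ht.
- exfalso; apply: HC; exists (fun i => B i - F i + R i); split.
    by rewrite tot_add tot_sub //; lia.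
  move=> v; rewrite deg_add deg_sub //; exact: stuck_C.
- exfalso.
  have := tot_sub HRA; have := tot_sub HFB => h3 h4.
  have [R' [F' [H1 H2 H3 H4]]] := @lemD (tot (fun i => A i - R i)) (fun i => A i - R i) (fun i => B i - F i) (leqnn _) ltac:(lia).
  have HF'B := lev_trans H2 (lev_subl _ _).
  apply: HC; exists (fun i => B i - F' i + R' i); split.
    by rewrite tot_add tot_sub //; have := tot_le HF'B; lia.
  move=> v; rewrite deg_add (deg_sub v HF'B); exact: (lift HRA HFB HS H1 H2 H4 v).
exists R, F; split => //.
have Hsum : \sum_(v < d) (deg R v - deg F v) + \sum_(v < d) deg F v =
            \sum_(v < d) (deg F v - deg R v) + \sum_(v < d) deg R v.
  by rewrite -!big_split /=; apply: eq_bigr => v _; lia.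
rewrite !sum_deg Ht in Hsum; move/addIn: Hsum => Hsum.
move: HN; rewrite /nrm big_split /= -Hsum => HN.
have [Hp0|Hp1] : \sum_(v < d) (deg R v - deg F v) = 0 \/ \sum_(v < d) (deg R v - deg F v) = 1.
  move: HN; set p := \sum_(v < d) (deg R v - deg F v); lia.
- left => v.
  have /eqP := Hp0; rewrite sum_nat_eq0 => /forallP /(_ v) /eqP e1.
  have /eqP := Hp0; rewrite Hsum sum_nat_eq0 => /forallP /(_ v) /eqP e2.
  lia.
- right.
  have one : forall f : 'I_d -> nat, \sum_(v < d) f v = 1 ->
      exists w, f w = 1 /\ forall t, t != w -> f t = 0.
    move=> f Hf; case: (boolP [exists w, f w != 0]); last first.
      move/existsPn => Hn; move: Hf; rewrite big1 // => t _; by apply/eqP; rewrite -[_ == _]negbK Hn.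
    case/existsP => w; rewrite -lt0n => Hw; exists w; move: Hf; rewrite (bigD1 w) //= => Hf.
    have Hfw : f w = 1 by lia.
    rewrite Hfw in Hf; move/eqP: Hf; rewrite -{2}(addn0 1) eqn_add2l => /eqP Hrest.
    split; first exact: Hfw.
    move=> t Htw; move/eqP: Hrest; rewrite sum_nat_eq0 => /forallP /(_ t).
    by rewrite Htw /= => /eqP.
  have [w [Hw Hw']] := one _ Hp1.
  have [z [Hz Hz']] := one (fun v => deg F v - deg R v) (etrans (esym Hsum) Hp1).
  have Hwz : w != z by apply/eqP => E; move: Hw Hz; rewrite E; lia.
  exists w, z; split => //.
  + move=> t; case: (eqVneq t w) => [->|Htw].
      rewrite (negbTE Hwz) ?eqxx; move: Hw; rewrite /=; lia.
    case: (eqVneq t z) => [->|Htz].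
      rewrite ?eqxx; move: Hz; rewrite /=; lia.
    have := Hw' t Htw; have := Hz' t Htz; lia.
  + have Hlt : deg F w < deg R w by lia.
    have := deg_eqS (proj1 (HS w) Hlt) => E.
    have := deg_le w HRA; lia.
Qed.

End Comb.

Import GRing.Theory.
Local Open Scope ring_scope.

Section Poly.
Variables (K : fieldType) (d : nat).
Local Notation S := {mpoly K[d]}.

Lemma genI_zs (P : S -> Prop) f : genI P f <->
  exists zs : seq (S * S), (forall z, z \in zs -> P z.2) /\ f = \sum_(z <- zs) z.1 * z.2.
Proof.
split.
- move=> [gs [cs [Hs [HP ->]]]]; exists (zip cs gs); split.
    move=> z Hz; have Hi : (index z (zip cs gs) < size (zip cs gs))%N by rewrite index_mem.
    rewrite -(nth_index (0,0) Hz) nth_zip //=; apply: HP; apply: mem_nth.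
    by move: Hi; rewrite size_zip Hs minnn.
  rewrite (big_nth (0,0)) big_mkord size_zip Hs minnn; apply: eq_bigr => i _.
  by rewrite nth_zip.
- move=> [zs [HP ->]]; exists (map snd zs), (map fst zs); split; first by rewrite !size_map.
  split.
    by move=> g /mapP [z Hz ->]; apply: HP.
  rewrite [LHS](big_nth (0,0)) big_mkord size_map; apply: eq_bigr => i _.
  by rewrite !(nth_map (0,0)).
Qed.

Lemma genI_add (P : S -> Prop) f g : genI P f -> genI P g -> genI P (f + g).
Proof.
move=> /genI_zs [z1 [H1 ->]] /genI_zs [z2 [H2 ->]]; apply/genI_zs; exists (z1 ++ z2); split.
  by move=> z; rewrite mem_cat => /orP [] Hz; [apply: H1|apply: H2].
by rewrite big_cat.
Qed.

Lemma genI_mul (P : S -> Prop) c f : genI P f -> genI P (c * f).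
Proof.
move=> /genI_zs [zs [H ->]]; apply/genI_zs; exists (map (fun z => (c * z.1, z.2)) zs); split.
  by move=> z /mapP [y Hy ->] /=; apply: H.
by rewrite big_map mulr_sumr; apply: eq_bigr => z _; rewrite mulrA.
Qed.

Lemma genI_gen (P : S -> Prop) g : P g -> genI P g.
Proof.
move=> H; apply/genI_zs; exists [:: (1, g)]; split; first by move=> z; rewrite inE => /eqP ->.
by rewrite big_seq1 mul1r.
Qed.

Lemma genI_0 (P : S -> Prop) : genI P 0.
Proof. by apply/genI_zs; exists [::]; rewrite big_nil. Qed.

Lemma genI_sum (P : S -> Prop) (T : Type) (r : seq T) (F : T -> S) :
  (forall x, genI P (F x)) -> genI P (\sum_(x <- r) F x).
Proof.
move=> H; elim: r => [|x r IH]; first by rewrite big_nil; exact: genI_0.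
by rewrite big_cons; apply: genI_add.
Qed.

Lemma princE (g f : S) : princ g f -> exists c, f = c * g.
Proof.
move=> [gs [cs [Hs [HP ->]]]]; exists (\sum_(i < size gs) cs`_i); rewrite mulr_suml.
apply: eq_bigr => i _; rewrite (HP gs`_i) //; exact: mem_nth.
Qed.

Lemma princ_genI (P : S -> Prop) g f : genI P g -> princ g f -> genI P f.
Proof. move=> Hg /princE [c ->]; exact: genI_mul. Qed.

Lemma msuppMX_inv (f : S) m u : u \in msupp (f * 'X_[m]) ->
  exists2 u', u' \in msupp f & u = (m + u')%MM.
Proof. by rewrite (perm_mem (msuppMX f m)) => /mapP [u' H ->]; exists u'. Qed.

Lemma msuppMX_in (f : S) m u : u \in msupp f -> (m + u)%MM \in msupp (f * 'X_[m]).
Proof. by move=> H; rewrite (perm_mem (msuppMX f m)); apply: map_f. Qed.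

Lemma princ_supp m (p : S) : princ 'X_[m] p -> forall u, u \in msupp p -> (m <= u)%MM.
Proof.
move=> /princE [c ->] u /msuppMX_inv [u' _ ->]; exact: lem_addr.
Qed.

Lemma supp_princ m (p : S) : (forall u, u \in msupp p -> (m <= u)%MM) -> princ 'X_[m] p.
Proof.
move=> H; rewrite [p]mpolyE big_seq.
have -> : \sum_(u <- msupp p | u \in msupp p) p@_u *: 'X_[u]
 = \sum_(u <- msupp p | u \in msupp p) ((p@_u *: 'X_[(u - m)%MM]) * 'X_[m]) :> S.
  apply: eq_bigr => u Hu; rewrite -scalerAl -mpolyXD submK //; exact: H.
rewrite -big_seq; apply: genI_sum => u; apply: genI_mul; exact: genI_gen.
Qed.

End Poly.

Lemma lex_nil (ys : seq nat) : ~ lex_gt [::] ys.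
Proof. by move=> [i [Hi _]]. Qed.

Lemma lex_cons (x y : nat) xs ys :
  lex_gt (x :: xs) (y :: ys) <-> (y < x)%N \/ (x = y /\ lex_gt xs ys).
Proof.
split.
- move=> [[|i] [Hi [Hpre Hlt]]]; first by left.
  right; split; first exact: (Hpre 0%N).
  exists i; split => //; split => // l Hl; exact: (Hpre l.+1).
- move=> [Hlt|[-> [i [Hi [Hpre Hlt]]]]]; first by exists 0%N.
  exists i.+1; split => //; split => // [[|l]] Hl //=; exact: Hpre.
Qed.

Lemma lex_tri (xs ys : seq nat) : size xs = size ys ->
  xs = ys \/ lex_gt xs ys \/ lex_gt ys xs.
Proof.
elim: xs ys => [|x xs IH] [|y ys] //=; first by left.
move=> [] /IH [->|[H|H]].
- case: (ltngtP x y) => [h|h|->]; [right; right|right; left|left] => //; apply/lex_cons; by left.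
- case: (ltngtP x y) => [h|h|->]; [right; right|right; left|right; left]; apply/lex_cons; by [left|left|right].
- case: (ltngtP x y) => [h|h|->]; [right; right|right; left|right; right]; apply/lex_cons; by [left|left|right].
Qed.

Lemma lex_trans (xs ys zs : seq nat) : size xs = size ys -> size ys = size zs ->
  lex_gt xs ys -> lex_gt ys zs -> lex_gt xs zs.
Proof.
elim: xs ys zs => [|x xs IH] ys zs; first by move=> _ _ /lex_nil.
case: ys => [|y ys] H1; first by [].
case: zs => [|z zs] H2; first by [].
move: H1 H2 => [H1] [H2] /lex_cons [h1|[e1 h1]] /lex_cons [h2|[e2 h2]]; apply/lex_cons.
- left; exact: ltn_trans h2 h1.
- left; by rewrite -e2.
- left; by rewrite e1.
- right; split; [by rewrite e1 e2|exact: IH h1 h2].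
Qed.

Section Main.
Variables (K : fieldType) (d : nat) (Ls : seq {set 'I_d}).
Local Notation S := {mpoly K[d]}.
Local Notation k := (size Ls).
Local Notation es := (nth set0 Ls).

Definition mono (s : nat -> nat) : 'X_{1..d} := [multinom deg k es s v | v < d].

Lemma monoE s v : mono s v = deg k es s v.
Proof. by rewrite mnmE. Qed.

Lemma mono_ext s t : (forall i, (i < k)%N -> s i = t i) -> mono s = mono t.
Proof.
move=> H; apply/mnmP => v; rewrite !monoE; apply: eq_bigr => i _; by rewrite H.
Qed.

Lemma edge_monE (e : {set 'I_d}) :
  edge_mon K e = 'X_[[multinom ((v \in e) : nat) | v < d]].
Proof.
rewrite /edge_mon mprodXE; congr mpolyX; apply/mnmP => v; rewrite mnm_sumE mnmE.
rewrite (eq_bigr (fun t => (t == v) : nat)); last by move=> t _; rewrite mnm1E.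
case: (boolP (v \in e)) => Hv.
  rewrite (bigD1 v) //= eqxx big1 // => t /andP [_ /negbTE ->] //.
by rewrite big1 // => t Ht; case: eqP => // E; move: Ht; rewrite E (negbTE Hv).
Qed.

Lemma prod_expr (a : seq nat) :
  \prod_(i < size Ls) edge_mon K (nth set0 Ls i) ^+ nth 0%N a i = 'X_[mono (nth 0%N a)] :> S.
Proof.
rewrite (eq_bigr (fun i : 'I_k => 'X_[[multinom ((v \in nth set0 Ls i) : nat) | v < d]] ^+ nth 0%N a i)).
  2: by move=> i _; rewrite edge_monE.
rewrite mprodXnE; congr mpolyX; apply/mnmP => v; rewrite mnm_sumE monoE.
by apply: eq_bigr => i _; rewrite mulmnE mnmE mulnC.
Qed.

Lemma Xmono_add s t : 'X_[mono (fun i => s i + t i)%N] = 'X_[mono s] * 'X_[mono t] :> S.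
Proof.
rewrite -mpolyXD; congr mpolyX; apply/mnmP => v; by rewrite mnmDE !monoE deg_add.
Qed.

Lemma pow_mono (E : {set {set 'I_d}}) : (forall i, (i < k)%N -> es i \in E) ->
  forall n s, (n <= tot k s)%N -> powI (edge_ideal E) n ('X_[mono s] : S).
Proof.
move=> HE; elim => [|n IH] s Hs /=.
  rewrite -[X in genI _ X]mulr1; apply: genI_mul; exact: genI_gen.
have [l [Hl Hsl]] := tot_pos (leq_ltn_trans (leq0n n) Hs).
set s' := fun i => (s i - (i == l))%N.
have Hlev : lev k (fun i => (i == l) : nat) s.
  by move=> i Hi; case: (eqVneq i l) => [->|].
have Hts' : tot k s' = (tot k s - 1)%N.
  by rewrite /s' tot_sub //; congr (_ - _)%N; rewrite /tot (bigD1 (Ordinal Hl)) //= eqxx big1 ?addn0 // => i /negbTE; rewrite -val_eqE /= => ->.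
have -> : mono s = mono (fun i => s' i + (i == l))%N.
  apply: mono_ext => i Hi; rewrite /s'; case: (eqVneq i l) => [->|] /=; rewrite ?subn0 ?addn0 ?subn1 ?addn1 ?prednK //.
rewrite Xmono_add; apply: genI_gen; exists 'X_[mono s'], 'X_[mono (fun i => (i == l) : nat)]; split.
  apply: IH; lia.
split => //; apply: genI_gen; exists (es l); first exact: HE.
rewrite edge_monE; congr mpolyX; apply/mnmP => v; by rewrite monoE mnmE deg_delta.
Qed.

End Main.

Unset Implicit Arguments.

Theorem theorem4p12 (K : fieldType) (d : nat) (E : {set {set 'I_d}})
    (Ls : seq {set 'I_d}) (n : nat) (gens : seq {mpoly K[d]}) :
  simple_graph E -> edge_order E Ls -> (1 <= n)%N -> ordered_gens Ls n gens ->
  forall k' j : nat, (1 <= k')%N -> (1 <= j <= k')%N -> (k'.+1 <= size gens)%N ->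
    ~ subI (mcolon gens`_(j.-1) gens`_k')
           (colonI (powI (edge_ideal E) n.+1) gens`_k') ->
    exists i : nat, [/\ (1 <= i <= k')%N,
      gen_by_variable (mcolon gens`_(i.-1) gens`_k') &
      subI (mcolon gens`_(j.-1) gens`_k') (mcolon gens`_(i.-1) gens`_k')].
Proof.
move=> Hsg [Huq HLs] Hn1 [Guq [Gmem Gord]] k' j Hk' /andP [Hj1 Hjk] Hsz Hnot.
have Hes : forall i, (i < size Ls)%N -> #|nth set0 Ls i| = 2.
  by move=> i Hi; apply: Hsg; rewrite -HLs; exact: mem_nth.
have HE : forall i, (i < size Ls)%N -> nth set0 Ls i \in E.
  by move=> i Hi; rewrite -HLs mem_nth.
have Hjk' : (j.-1 < k')%N by lia.
have [a [b [[Ea Ma] [[Eb Mb] Hab]]]] := Gord _ _ Hjk' Hsz.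
move: (Ea) (Eb) => [Sa [Na Pa]] [Sb [Nb Pb]].
rewrite prod_expr in Pa; rewrite prod_expr in Pb.
set k := size Ls in Sa Sb Hes HE Pa Pb.
set es := nth set0 Ls.
set an := nth 0%N a in Pa; set bn := nth 0%N b in Pb.
have [l [Hl [Hpre Hlt]]] := Hab.
have Hlk : (l < k)%N by rewrite -Sa.
have Ta : tot k an = n by rewrite -Na sumnE (big_nth 0%N) big_mkord Sa.
have Tb : tot k bn = n by rewrite -Nb sumnE (big_nth 0%N) big_mkord Sb.
pose A2 i := if (i < l)%N then 0%N else if i == l then (an l - bn l)%N else an i.
pose B2 i := if (i <= l)%N then 0%N else bn i.
pose P i := if (i < l)%N then an i else if i == l then bn l else 0%N.
have HaP : forall i, an i = (P i + A2 i)%N.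
  move=> i; rewrite /A2 /P; case: (ltngtP i l) => h; rewrite ?addn0 ?add0n //.
  rewrite h subnKC //; exact: ltnW.
have HbP : forall i, bn i = (P i + B2 i)%N.
  move=> i; rewrite /B2 /P; case: (ltngtP i l) => h; rewrite ?addn0 ?add0n ?h //.
  exact: esym (Hpre i h).
have dA : forall v, deg k es an v = (deg k es P v + deg k es A2 v)%N.
  by move=> v; rewrite -deg_add; apply: eq_bigr => i _; rewrite HaP.
have dB : forall v, deg k es bn v = (deg k es P v + deg k es B2 v)%N.
  by move=> v; rewrite -deg_add; apply: eq_bigr => i _; rewrite HbP.
have tA : tot k an = (tot k P + tot k A2)%N.
  by rewrite -tot_add; apply: eq_bigr => i _; rewrite HaP.
have tB : tot k bn = (tot k P + tot k B2)%N.
  by rewrite -tot_add; apply: eq_bigr => i _; rewrite HbP.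
have HtAB : tot k A2 = tot k B2 by lia.
have HA2 : (0 < A2 l)%N by rewrite /A2 ltnn eqxx subn_gt0.
have HC : ~ (exists C, (tot k B2 < tot k C)%N /\
                forall v, (deg k es C v <= maxn (deg k es A2 v) (deg k es B2 v))%N).
  move=> [C [HC1 HC2]]; apply: Hnot => f Hf.
  rewrite /mcolon /colonI Pa Pb in Hf *.
  pose Cf i := (P i + C i)%N.
  have Hpow : powI (edge_ideal E) n.+1 ('X_[mono Ls Cf] : {mpoly K[d]}).
    apply: pow_mono => //; rewrite /Cf tot_add -/k; lia.
  apply: (princ_genI Hpow); apply: supp_princ => u Hu.
  have /mnm_lepP h1 := princ_supp Hf Hu.
  have [u' _ Eu] := msuppMX_inv Hu.
  apply/mnm_lepP => v; have := h1 v; rewrite Eu !mnmDE !monoE deg_add.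
  have := HC2 v; have := dA v; have := dB v; rewrite -/es -/k; lia.
have [R [F [HRA HFB HRl HtRF Hcase]]] := lemCore Hes Hlk HA2 HtAB HC.
pose c i := (bn i - F i + R i)%N.
pose cs := mkseq c k.
have HFb : lev k F bn.
  move=> i Hi; apply: leq_trans (HFB i Hi) _; rewrite /B2; case: ifP => //.
have HF0 : forall i, (i <= l)%N -> (i < k)%N -> F i = 0%N.
  by move=> i Hi Hik; apply/eqP; rewrite -leqn0; have := HFB i Hik; rewrite /B2 Hi.
have HR0 : forall i, (i < l)%N -> (i < k)%N -> R i = 0%N.
  by move=> i Hi Hik; apply/eqP; rewrite -leqn0; have := HRA i Hik; rewrite /A2 Hi.
have Hcexpr : is_expr Ls n ('X_[mono Ls c] : {mpoly K[d]}) cs.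
  split; first by rewrite size_mkseq.
  split.
    rewrite sumnE (big_nth 0%N) big_mkord size_mkseq.
    rewrite (eq_bigr (fun i : 'I_k => c i)); last by move=> i _; rewrite nth_mkseq.
    have -> : \sum_(i < k) c i = tot k c by [].
    rewrite /c tot_add tot_sub //; have := tot_le HFb; lia.
  rewrite prod_expr; congr mpolyX; apply: mono_ext => i Hi; by rewrite nth_mkseq.
have Hclex : lex_gt cs b.
  exists l; split; first by rewrite size_mkseq.
  split.
    move=> t Ht; have Htk : (t < k)%N by lia.
    rewrite nth_mkseq // /c HF0 ?HR0 ?subn0 ?addn0 //; exact: ltnW.
  rewrite nth_mkseq // /c HF0 // subn0; rewrite -/bn; lia.
have Hdeg : forall v, deg k es c v = (deg k es bn v - deg k es F v + deg k es R v)%N.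
  by move=> v; rewrite /c deg_add deg_sub.
case: Hcase => [Heq|[w [z [Hwz Heq Hgw]]]].
  exfalso; apply: (Mb cs) Hclex; rewrite Pb.
  have <- : mono Ls c = mono Ls bn.
    apply/mnmP => v; rewrite !monoE Hdeg Heq; have := deg_le es v HFb; rewrite -/k -/es; lia.
  exact: Hcexpr.
have Hmono : forall t, (mono Ls c t + (t == z) = mono Ls bn t + (t == w))%N.
  move=> t; rewrite !monoE Hdeg; have := Heq t; have := deg_le es t HFb; rewrite -/k -/es; lia.
have Hawb : (mono Ls bn w < mono Ls an w)%N.
  by rewrite !monoE -/k -/es dA dB ltn_add2l.
set N := ('X_[mono Ls c] : {mpoly K[d]}).
have HN : N \in gens by apply/Gmem; exists cs.
set i0 := index N gens.
have Hi0 : (i0 < size gens)%N by rewrite index_mem.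
have Hgi0 : gens`_i0 = N := nth_index 0 HN.
have Hmw : mono Ls c w = (mono Ls bn w).+1.
  have := Hmono w; rewrite eqxx (negbTE Hwz) /=; lia.
have Hmt : forall t, t != w -> (mono Ls c t <= mono Ls bn t)%N.
  by move=> t /negbTE Ht; have := Hmono t; rewrite Ht; lia.
have Hi0k : (i0 < k')%N.
  case: (ltngtP i0 k') => // h; exfalso.
  - have [b' [a' [[Eb' Mb'] [[Ea' Ma'] Hba]]]] := Gord _ _ h Hi0.
    rewrite Hgi0 in Ea' Ma'.
    have Sb' : size b' = size b by rewrite Sb; case: Eb'.
    have Sa' : size a' = size b by rewrite Sb; case: Ea'.
    have bb : b' = b.
      case: (lex_tri Sb') => [//|[H|H]]; exfalso.
      + exact: (Mb b' Eb' H).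
      + exact: (Mb' b Eb H).
    rewrite bb in Hba.
    apply: (Ma' cs Hcexpr); apply: lex_trans Hclex Hba.
    + by rewrite size_mkseq Sb.
    + by rewrite Sa'.
  - apply: (Mb cs) Hclex; rewrite -h Hgi0; exact: Hcexpr.
exists i0.+1; split; first by lia.
- rewrite /= Hgi0; exists w => f; rewrite /mcolon /colonI Pb; split => Hf.
  + apply: supp_princ => u Hu; rewrite lep1mP -lt0n.
    have /mnm_lepP /(_ w) := princ_supp Hf (msuppMX_in _ Hu).
    rewrite mnmDE Hmw; lia.
  + apply: supp_princ => u Hu; have [u' Hu' ->] := msuppMX_inv Hu.
    have := princ_supp Hf Hu'; rewrite lep1mP -lt0n => Hw.
    apply/mnm_lepP => t; rewrite mnmDE.
    case: (eqVneq t w) => [->|htw]; first by rewrite Hmw; lia.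
    have := Hmt t htw; lia.
- move=> f; rewrite /= Hgi0 /mcolon /colonI Pa Pb => Hf.
  apply: supp_princ => u Hu; have /mnm_lepP h1 := princ_supp Hf Hu.
  have [u' _ Eu] := msuppMX_inv Hu.
  apply/mnm_lepP => t; have := h1 t; rewrite Eu mnmDE.
  case: (eqVneq t w) => [->|htw]; first by rewrite Hmw; lia.
  have := Hmt t htw; lia.
Qed.
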